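(* For every feasible set of jobs, the online policy Thrashing completes every job $j$ with interval stretch $s_j=(C_j-r_j)/(d_j-r_j)\le 4$.
   Context: Jobs $j$ have release time $r_j$, due date $d_j>r_j$, work $w_j>0$, and linear speed function $f_j(t)=m_j(t-r_j)$ with $m_j>0$. A single processor runs at most one job at a time, preemption is allowed, and running job $j$ during a set of times $S$ completes $\int_S f_j(t)\,dt$ units of its work; $C_j$ denotes the completion time of job $j$. A set of jobs is feasible if some schedule runs each job only within $[r_j,d_j]$ and completes it by $d_j$. Online: job $j$ becomes known only at time $r_j$. The policy Thrashing: at each time $t$, consider the released unfinished jobs $j$ whose current stretch $(t-r_j)/(d_j-r_j)$ is at least $2$; if there is none, the processor idles, otherwise it runs the one among them with the latest release time (ties broken arbitrarily). *)

(* Defs.v *)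
From HB Require Import structures.
From mathcomp Require Import all_boot all_order all_algebra.
From mathcomp Require Import all_classical all_reals all_analysis.
Set Implicit Arguments. Unset Strict Implicit. Unset Printing Implicit Defensive.
Import Order.TTheory GRing.Theory Num.Theory.
Local Open Scope classical_set_scope.
Local Open Scope ring_scope.

(* A (single-processor, preemptive) schedule for a finite job set J is a map
   sigma : R -> option J; sigma t = Some j means job j runs at time t,
   sigma t = None means the processor idles.  At most one job runs at a time
   by construction. *)

Definition runs {R : realType} {J : finType} (sigma : R -> option J) (j : J)
  : set R := [set t | sigma t = Some j].

Definition measurable_schedule {R : realType} {J : finType}
  (sigma : R -> option J) : Prop :=
  forall j : J, measurable (runs sigma j).

Definition work {R : realType} {J : finType} (r m : J -> R)
  (sigma : R -> option J) (j : J) (t : R) : \bar R :=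
  (\int[lebesgue_measure]_(s in runs sigma j `&` `[r j, t]%classic)
      (m j * (s - r j))%:E)%E.

Definition feasible {R : realType} {J : finType} (r d w m : J -> R) : Prop :=
  exists sigma : R -> option J,
    measurable_schedule sigma /\
    (forall j t, sigma t = Some j -> r j <= t <= d j) /\
    (forall j, ((w j)%:E <= work r m sigma j (d j))%E).

Definition thrash_candidate {R : realType} {J : finType} (r d w m : J -> R)
  (sigma : R -> option J) (j : J) (t : R) : Prop :=
  r j <= t /\ (work r m sigma j t < (w j)%:E)%E /\
  2 <= (t - r j) / (d j - r j).

(* sigma is a schedule produced by the policy Thrashing (with some arbitrary
   tie-breaking): at each time t it idles iff there is no candidate, and
   otherwise runs a candidate with the latest release time. *)
Definition thrashing_schedule {R : realType} {J : finType} (r d w m : J -> R)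
  (sigma : R -> option J) : Prop :=
  measurable_schedule sigma /\
  forall t : R,
    match sigma t with
    | None => forall k, ~ thrash_candidate r d w m sigma k t
    | Some j => thrash_candidate r d w m sigma j t /\
                forall k, thrash_candidate r d w m sigma k t -> r k <= r j
    end.

(* Main.v *)
Require Import Defs.
From HB Require Import structures.
From mathcomp Require Import all_boot all_order all_algebra.
From mathcomp Require Import all_classical all_reals all_analysis.
From mathcomp Require Import measurable_realfun.
From mathcomp Require Import lra.
Import Order.TTheory GRing.Theory Num.Theory.
Local Open Scope classical_set_scope.
Local Open Scope ring_scope.

Section H.
Context {R : realType}.
Notation mu := (@lebesgue_measure R).

Lemma lin_meas (D : set R) (a b : R) : measurable_fun D (fun s : R => ((a * (s - b))%:E : \bar R)).
Proof.
apply/measurable_EFinP; apply: measurable_funM => //; apply: measurable_funB => //.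
Qed.

Lemma int_lo (D : set R) (a b c : R) : measurable D -> 0 <= c ->
  (forall s, D s -> c <= a * (s - b)) ->
  (c%:E * mu D <= \int[mu]_(s in D) (a * (s - b))%:E)%E.
Proof.
move=> mD c0 Hc.
rewrite -(@integral_cst _ _ _ mu D mD).
apply: (ge0_le_integral mu mD).
- by move=> x _; rewrite lee_fin.
- exact: measurable_cst.
- exact: lin_meas.
- by move=> x Dx; rewrite lee_fin; apply: Hc.
Qed.

Lemma int_hi (D : set R) (a b c : R) : measurable D ->
  (forall s, D s -> 0 <= a * (s - b) <= c) ->
  (\int[mu]_(s in D) (a * (s - b))%:E <= c%:E * mu D)%E.
Proof.
move=> mD Hc.
rewrite -(@integral_cst _ _ _ mu D mD).
apply: (ge0_le_integral mu mD).
- by move=> x Dx; rewrite lee_fin; case/andP: (Hc x Dx).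
- exact: lin_meas.
- exact: measurable_cst.
- by move=> x Dx; rewrite lee_fin; case/andP: (Hc x Dx).
Qed.

End H.
Section W.
Context {R : realType} {J : finType} (r m : J -> R) (sigma : R -> option J).
Notation mu := (@lebesgue_measure R).
Hypothesis ms : measurable_schedule sigma.

Lemma work_mono j s t : 0 <= m j -> s <= t ->
  (work r m sigma j s <= work r m sigma j t)%E.
Proof.
move=> m0 st; rewrite /work.
apply: ge0_subset_integral.
- by apply: measurableI => //; apply: ms.
- by apply: measurableI => //; apply: ms.
- exact: lin_meas.
- move=> x [_]; rewrite /= ?in_itv /= => /andP[rx _].
  by rewrite lee_fin mulr_ge0 // subr_ge0.
- move=> x [Hx]; rewrite /= ?in_itv /= => /andP[rx xs]; split => //.
  by rewrite rx (le_trans xs st).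
Qed.

Lemma work_incr j s t : 0 <= m j -> s <= t ->
  (work r m sigma j t <= work r m sigma j s + (m j * `|t - r j| * (t - s))%:E)%E.
Proof.
move=> m0 st; rewrite /work.
set A := runs sigma j `&` `[r j, s].
set B := runs sigma j `&` `[r j, t] `&` `]s, +oo[.
have mA : measurable A by apply: measurableI => //; apply: ms.
have mB : measurable B by apply: measurableI => //; apply: measurableI => //; apply: ms.
have -> : runs sigma j `&` `[r j, t] = A `|` B.
  apply/seteqP; split => x.
    move=> [Hx]; rewrite /= ?in_itv /= => /andP[rx xt].
    have [xs|sx] := leP x s.
      by left; split => //; rewrite /= ?in_itv /= rx xs.
    by right; split; [split => //; rewrite /= ?in_itv /= rx xt| rewrite /= ?in_itv /= sx].
  move=> [[Hx]|[[Hx]]]; rewrite /= ?in_itv /=.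
    by move=> /andP[rx xs]; split => //; rewrite /= ?in_itv /= rx (le_trans xs st).
  by move=> /andP[rx xt] _; split => //; rewrite /= ?in_itv /= rx xt.
rewrite ge0_integral_setU //.
- apply: leeD => //.
  apply: (le_trans (@int_hi _ B (m j) (r j) (m j * `|t - r j|) mB _)).
    move=> x [[_]]; rewrite /= ?in_itv /= => /andP[rx xt] _.
    rewrite mulr_ge0 ?subr_ge0 //=; apply: ler_wpM2l => //.
    by rewrite (le_trans _ (ler_norm _)) // lerB.
  rewrite [X in (_ <= X)%E]EFinM; apply: lee_wpmul2l; first by rewrite lee_fin mulr_ge0.
  have HB : B `<=` `]s, t].
    by move=> x [[_]]; rewrite /= ?in_itv /= => /andP[_ xt] /andP[sx _]; rewrite /= ?in_itv /= sx xt.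
  have := le_measure lebesgue_measure _ _ HB; rewrite !inE => /(_ mB (measurable_itv _)) H1; apply: (le_trans H1).
  have := @lebesgue_measure_itv R `]s, t]; rewrite /= => ->.
  case: ifP => _; first by rewrite lee_fin lexx.
  by rewrite -[0%E]/(0%:E) lee_fin subr_ge0.
- apply: lin_meas.
- move=> x [[_]|[[_]]]; rewrite /= ?in_itv /= => /andP[rx _];
    by rewrite lee_fin mulr_ge0 // subr_ge0.
- rewrite disj_set2E; apply/eqP/seteqP; split => // x [[_]] + [_].
  rewrite /= ?in_itv /= => /andP[_ xs] /andP[sx _].
  by move: (lt_le_trans sx xs); rewrite ltxx.
Qed.
End W.
Section S.
Context {R : realType}.
Notation mu := (@lebesgue_measure R).

Lemma mu_itv_le (s t : R) : (mu `]s, t] <= `|t - s|%:E)%E.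
Proof.
have := @lebesgue_measure_itv R `]s, t]; rewrite /= => ->.
case: ifP => _; first by rewrite lee_fin ler_norm.
by rewrite -[0%E]/(0%:E) lee_fin.
Qed.

Lemma mu_cc (s t : R) : s <= t -> mu `[s, t] = (t - s)%:E.
Proof.
move=> st; have := @lebesgue_measure_itv R `[s, t]; rewrite /= => ->.
case: ifP => H; first by rewrite EFinB.
move: H; rewrite lte_fin => /negbT; rewrite -leNgt => ts; have -> : t = s by apply/eqP; rewrite eq_le ts st.
by rewrite subrr.
Qed.

Lemma mu_le {A B : set R} : measurable A -> measurable B -> A `<=` B ->
  (mu A <= mu B)%E.
Proof.
by move=> mA mB AB; have := le_measure lebesgue_measure _ _ AB; rewrite !inE; apply.
Qed.

Lemma mu_fin {A : set R} {L U : R} : measurable A -> A `<=` `[L, U] ->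
  mu A = (fine (mu A))%:E.
Proof.
move=> mA AU; rewrite fineK // ge0_fin_numE //.
have H1 := mu_le mA (measurable_itv `[L, U]) AU; apply: (le_lt_trans H1).
have := @lebesgue_measure_itv R `[L, U]; rewrite /= => ->.
by case: ifP => _; rewrite ?ltry // -EFinB ltry.
Qed.

Lemma sup_meas (A : set R) (L U a : R) : measurable A -> A `<=` `[L, U] ->
  0 <= a -> (forall t, A t -> (mu (A `&` `]-oo, t]) <= a%:E)%E) ->
  (mu A <= a%:E)%E.
Proof.
move=> mA AU a0 H.
have [A0|/set0P/negP] := pselect (A !=set0); last first.
  by rewrite negbK => /eqP ->; rewrite measure0 lee_fin.
have hsup : has_sup A.
  split => //; exists U => x /AU; rewrite /= ?in_itv /= => /andP[].
  by [].
rewrite (mu_fin mA AU) lee_fin leNgt; apply/negP => Hlt.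
set al := fine (mu A) in Hlt *.
have ep : 0 < al - a by rewrite subr_gt0.
have [t At tt] := sup_adherent ep hsup.
have tle : t <= sup A by apply: sup_upper_bound.
have sub : A `<=` (A `&` `]-oo, t]) `|` `]t, sup A].
  move=> x Ax; have [xt|tx] := leP x t.
    by left; split => //; rewrite /= ?in_itv /= xt.
  by right; rewrite /= ?in_itv /= tx /=; apply: sup_upper_bound.
have m1 : measurable (A `&` `]-oo, t]) by apply: measurableI.
have H1 := mu_le mA (measurableU _ _ m1 (measurable_itv _)) sub.
have := le_trans H1 (measureU2 (@lebesgue_measure R) m1 (measurable_itv _)).
move=> H2; have := le_trans H2 (leeD (H t At) (mu_itv_le t (sup A))).
rewrite (mu_fin mA AU) -EFinD lee_fin -/al ger0_norm ?subr_ge0 //.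
move=> H3; move: tt; lra.
Qed.
End S.
Section S.
Context {R : realType}.
Notation mu := (@lebesgue_measure R).

Lemma in_bigU {I : eqType} (s : seq I) (P : pred I) (F : I -> set R) x :
  (\big[setU/set0]_(k <- s | P k) F k) x -> exists k, [/\ k \in s, P k & F k x].
Proof.
elim: s => [|y s IH]; first by rewrite big_nil.
rewrite big_cons; case: ifP => Py.
  move=> [Fx|/IH [k [ks Pk Fk]]]; first by exists y; rewrite inE eqxx.
  by exists k; rewrite inE ks orbT.
by move=> /IH [k [ks Pk Fk]]; exists k; rewrite inE ks orbT.
Qed.

Lemma bigU_in {I : eqType} (s : seq I) (P : pred I) (F : I -> set R) k x :
  k \in s -> P k -> F k x -> (\big[setU/set0]_(k <- s | P k) F k) x.
Proof.
elim: s => [|y s IH]; first by [].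
rewrite inE big_cons => /orP[/eqP <-|ks] Pk Fk; first by rewrite Pk; left.
by case: ifP => _; [right|]; apply: IH.
Qed.

Lemma mu_bigU {I : eqType} (s : seq I) (P : pred I) (F : I -> set R) :
  uniq s -> (forall k, measurable (F k)) ->
  (forall k l x, k != l -> F k x -> F l x -> False) ->
  mu (\big[setU/set0]_(k <- s | P k) F k) = (\sum_(k <- s | P k) mu (F k))%E.
Proof.
move=> + mF dis; elim: s => [|y s IH]; first by rewrite !big_nil measure0.
rewrite /= => /andP[ys us]; rewrite !big_cons; case: ifP => _; last exact: IH.
rewrite measureU //; first by congr (_ + _)%E; apply: IH.
  exact: mF.
  by apply: bigsetU_measurable => i _; exact: mF.
apply/seteqP; split => // x [Fy /in_bigU [k [ks _ Fk]]].
apply: (dis y k x) => //; apply/negP => /eqP yk; move: ys; rewrite yk ks.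
by [].
Qed.
End S.
Section K.
Context {R : realType} {J : finType} (r d w m : J -> R)
  (hrd : forall j, r j < d j) (hw : forall j, 0 < w j) (hm : forall j, 0 < m j).
Notation mu := (@lebesgue_measure R).

Lemma cand_le {sigma k t} : thrash_candidate r d w m sigma k t ->
  r k + 2 * (d k - r k) <= t.
Proof.
move=> [_ [_]]; rewrite ler_pdivlMr ?subr_gt0 //; lra.
Qed.

Lemma key (hfeas : feasible r d w m)
  (sigma : R -> option J) (hthr : thrashing_schedule r d w m sigma) (j : J) :
  ((w j)%:E <= work r m sigma j (r j + 4 * (d j - r j)))%E.
Proof.
set p := d j - r j; have hp : 0 < p by rewrite subr_gt0.
set T1 := r j + 4 * p; set T0 := r j + 2 * p.
rewrite leNgt; apply/negP => HW.
have [ms hs] := hthr.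
have [s' [ms' [hwin hcomp]]] := hfeas.
have candj t : T0 <= t <= T1 -> thrash_candidate r d w m sigma j t.
  move=> /andP[t0 t1]; split; first by rewrite /T0 in t0; lra.
  split; first exact: (le_lt_trans (@work_mono _ _ r m sigma ms j t T1 (ltW (hm j)) t1) HW).
  by rewrite ler_pdivlMr // -/p; rewrite /T0 in t0; lra.
set A := fun k => runs sigma k `&` `[T0, T1].
set B := fun k => runs s' k `&` `[r k, d k].
set P := fun k => (r j <= r k) && (r k + 2 * (d k - r k) <= T1).
have mA k : measurable (A k) by apply: measurableI => //; apply: ms.
have mB k : measurable (B k) by apply: measurableI => //; apply: ms'.
have disA k l x : k != l -> A k x -> A l x -> False.
  by move=> /eqP kl [Hk _] [Hl _]; apply: kl; move: Hk Hl; rewrite /runs /= => -> [].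
have disB k l x : k != l -> B k x -> B l x -> False.
  by move=> /eqP kl [Hk _] [Hl _]; apply: kl; move: Hk Hl; rewrite /runs /= => -> [].
have cover : `[T0, T1] `<=` \big[setU/set0]_(k <- index_enum J | P k) A k.
  move=> t Ht; have Ht' : T0 <= t <= T1 by move: Ht; rewrite /= ?in_itv.
  have := hs t; case E : (sigma t) => [k|] H; last first.
    by exfalso; apply: (H j); apply: candj.
  have Pk : P k.
    apply/andP; split; first by apply: H.2; apply: candj.
    have := cand_le H.1; case/andP: Ht' => _ t1; lra.
  apply: (@bigU_in R J _ P A k t (mem_index_enum k) Pk); split => //.
have sumA : ((2 * p)%:E <= \sum_(k <- index_enum J | P k) mu (A k))%E.
  rewrite -mu_bigU //; last exact: index_enum_uniq.
  have -> : (2 * p)%:E = mu `[T0, T1] by rewrite mu_cc /T0 /T1; [congr (_%:E); lra| lra].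
  apply: mu_le => //; apply: bigsetU_measurable => k _; exact: mA.
have candk t k : sigma t = Some k -> thrash_candidate r d w m sigma k t.
  by move=> E; have := hs t; rewrite E => -[].
have boundA k : P k ->
    (mu (A k) <= (w k / (m k * (2 * (d k - r k))))%:E)%E.
  move=> Pk; set pk := d k - r k; have hpk : 0 < pk by rewrite subr_gt0.
  set c := m k * (2 * pk); have hc : 0 < c by rewrite mulr_gt0 // mulr_gt0.
  apply: (@sup_meas R (A k) T0 T1) => //.
  - by move=> x [].
  - by rewrite divr_ge0 // ltW.
  move=> t [Hkt Ht].
  have ck := candk t k Hkt.
  set D := A k `&` `]-oo, t].
  have mD : measurable D by apply: measurableI.
  have H1 : (c%:E * mu D <= \int[mu]_(s in D) (m k * (s - r k))%:E)%E.
    apply: int_lo => //; first exact: ltW.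
    move=> s [[Hs _] _]; have := cand_le (candk s k Hs); rewrite -/pk => hs2.
    by rewrite /c ler_wpM2l ?(ltW (hm k)) //; lra.
  have H2 : (\int[mu]_(s in D) (m k * (s - r k))%:E <= work r m sigma k t)%E.
    apply: ge0_subset_integral => //.
    - by apply: measurableI => //; apply: ms.
    - exact: lin_meas.
    - move=> x [_]; rewrite /= ?in_itv /= => /andP[rx _].
      by rewrite lee_fin mulr_ge0 ?(ltW (hm k)) // subr_ge0.
    - move=> x [[Hx _]]; rewrite /= ?in_itv /= => xt; split => //.
      have := (candk x k Hx).1; rewrite /= ?in_itv /= => ->; exact: xt.
  have H3 := ck.2.1.
  have H4 := le_lt_trans (le_trans H1 H2) H3.
  have DU : D `<=` `[T0, T1] by move=> x [[]].
  move: H4; rewrite (mu_fin mD DU) -EFinM !lte_fin lee_fin => H4.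
  by rewrite ler_pdivlMr // mulrC ltW.
have AU k : A k `<=` `[T0, T1] by move=> x [].
have BU k : B k `<=` `[r k, d k] by move=> x [].
have boundAj : fine (mu (A j)) * (m j * (2 * p)) < w j.
  have H1 : ((m j * (2 * p))%:E * mu (A j) <= \int[mu]_(s in A j) (m j * (s - r j))%:E)%E.
    apply: int_lo => //; first by rewrite ltW // mulr_gt0 // mulr_gt0.
    move=> s [_]; rewrite /= ?in_itv /= => /andP[s0 _].
    by rewrite ler_wpM2l ?(ltW (hm j)) //; rewrite /T0 in s0; lra.
  have H2 : (\int[mu]_(s in A j) (m j * (s - r j))%:E <= work r m sigma j T1)%E.
    have mRj : measurable (runs sigma j `&` `[r j, T1]) by apply: measurableI => //; apply: ms.
    apply: (ge0_subset_integral mu (mA j) mRj).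
    - exact: lin_meas.
    - move=> x [_]; rewrite /= ?in_itv /= => /andP[rx _].
      by rewrite lee_fin mulr_ge0 ?(ltW (hm j)) // subr_ge0.
    - move=> x [Hx]; rewrite /= ?in_itv /= => /andP[x0 x1]; split => //.
      by rewrite /= ?in_itv /=; rewrite /T0 in x0; apply/andP; split => //; lra.
  have H4 := le_lt_trans (le_trans H1 H2) HW.
  by move: H4; rewrite (mu_fin (mA j) (AU j)) -EFinM lte_fin mulrC.
have boundB k : w k <= fine (mu (B k)) * (m k * (d k - r k)).
  have H1 := hcomp k; rewrite /work -/(B k) in H1.
  have H2 : (\int[mu]_(s in B k) (m k * (s - r k))%:E <= (m k * (d k - r k))%:E * mu (B k))%E.
    apply: int_hi => // s [_]; rewrite /= ?in_itv /= => /andP[s0 s1].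
    rewrite mulr_ge0 ?(ltW (hm k)) ?subr_ge0 //=.
    by rewrite ler_wpM2l ?(ltW (hm k)) // lerB.
  have := le_trans H1 H2; rewrite (mu_fin (mB k) (BU k)) -EFinM lee_fin.
  by rewrite mulrC.
have sumB : (\sum_(k <- index_enum J | P k) mu (B k) <= (4 * p)%:E)%E.
  rewrite -mu_bigU //; last exact: index_enum_uniq.
  have -> : (4 * p)%:E = mu `[r j, T1] by rewrite mu_cc /T1; [congr (_%:E); lra| lra].
  apply: mu_le => //; first by apply: bigsetU_measurable => k _; exact: mB.
  move=> x /in_bigU [k [_ /andP[Pk1 Pk2] [_ Bx]]].
  move: Bx; rewrite /= ?in_itv /= => /andP[x0 x1].
  have := hrd k => hk; rewrite (le_trans Pk1 x0) /=; lra.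
have fa k : mu (A k) = (fine (mu (A k)))%:E := mu_fin (mA k) (AU k).
have fb k : mu (B k) = (fine (mu (B k)))%:E := mu_fin (mB k) (BU k).
have ha : 2 * p <= \sum_(k <- index_enum J | P k) fine (mu (A k)).
  by rewrite -lee_fin -sumEFin; under eq_bigr => k _ do rewrite -fa.
have hb : \sum_(k <- index_enum J | P k) fine (mu (B k)) <= 4 * p.
  by rewrite -lee_fin -sumEFin; under eq_bigr => k _ do rewrite -fb.
have Pj : P j by apply/andP; split => //; rewrite /T1 -/p; lra.
have hk k : P k -> 2 * fine (mu (A k)) <= fine (mu (B k)).
  move=> Pk; have := boundA k Pk; rewrite fa lee_fin ler_pdivlMr; last first.
    by rewrite mulr_gt0 // mulr_gt0 // subr_gt0.
  move=> h1; have h2 := boundB k; have h3 := hrd k; have h4 := hm k.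
  have h5 : 0 < m k * (d k - r k) by rewrite mulr_gt0 // subr_gt0.
  nra.
have hj : 2 * fine (mu (A j)) < fine (mu (B j)).
  have h2 := boundB j; rewrite -/p in h2; have h4 := hm j.
  have h5 : 0 < m j * p by rewrite mulr_gt0.
  nra.
have hsum : 2 * \sum_(k <- index_enum J | P k) fine (mu (A k)) <
            \sum_(k <- index_enum J | P k) fine (mu (B k)).
  rewrite mulr_sumr (bigD1 j Pj) [X in _ < X](bigD1 j Pj) /=.
  apply: ltr_leD => //; apply: ler_sum => k /andP[Pk _]; exact: hk.
lra.
Qed.
End K.
Theorem mainTheorem7 (R : realType) (J : finType) (r d w m : J -> R)
  (hrd : forall j, r j < d j) (hw : forall j, 0 < w j) (hm : forall j, 0 < m j)
  (hfeas : feasible r d w m)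
  (sigma : R -> option J) (hthr : thrashing_schedule r d w m sigma) :
  forall j : J, exists C : R,
    ((w j)%:E <= work r m sigma j C)%E /\
    (forall t, t < C -> (work r m sigma j t < (w j)%:E)%E) /\
    (C - r j) / (d j - r j) <= 4.
Proof.
move=> j.
have ms := hthr.1.
set p := d j - r j; have hp : 0 < p by rewrite subr_gt0.
set T1 := r j + 4 * p.
have hK : ((w j)%:E <= work r m sigma j T1)%E by apply: key.
set W := work r m sigma j.
have mono s t : s <= t -> (W s <= W t)%E by apply: work_mono => //; exact: ltW.
set S := [set t | (W t < (w j)%:E)%E].
have S0 : S (r j - 1).
  rewrite /S /W /work /=.
  have -> : runs sigma j `&` `[r j, r j - 1] = set0.
    apply/seteqP; split => // x [_]; rewrite /= ?in_itv /= => /andP[a b]; lra.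
  by rewrite integral_set0 lte_fin.
have ub t : S t -> t <= T1.
  rewrite /S /= => Ht; rewrite leNgt; apply/negP => /ltW /mono Ht2.
  by have := le_lt_trans (le_trans hK Ht2) Ht; rewrite ltxx.
have hsup : has_sup S by split; [exists (r j - 1)| exists T1 => t /ub].
set C := sup S.
have CT1 : C <= T1 by apply: ge_sup => //; exists (r j - 1).
have below t : t < C -> (W t < (w j)%:E)%E.
  move=> tC; have ep : 0 < C - t by rewrite subr_gt0.
  have [e Se te] := sup_adherent ep hsup.
  have := mono t e; rewrite -/C in te.
  by move=> /(_ _) H; apply: (le_lt_trans (H _) Se); lra.
exists C; split; last split => //.
  rewrite leNgt; apply/negP => HC.
  have W0 : (0 <= W C)%E.
    apply: integral_ge0 => x [_]; rewrite /= ?in_itv /= => /andP[rx _].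
    by rewrite lee_fin mulr_ge0 ?(ltW (hm j)) // subr_ge0.
  have fin : W C = (fine (W C))%:E.
    by rewrite fineK // ge0_fin_numE // (lt_le_trans HC) // leey.
  set g := fine (W C) in fin.
  move: HC; rewrite fin lte_fin => Hg.
  have g0 : 0 <= g by move: W0; rewrite fin lee_fin.
  set M := m j * (`|C - r j| + 1).
  have hM : 0 < M by rewrite mulr_gt0 // ltr_wpDl.
  set dl := Num.min 1 ((w j - g) / (2 * M)).
  have dl0 : 0 < dl by rewrite lt_min ltr01 /= divr_gt0 ?subr_gt0 // mulr_gt0.
  have dl1 : dl <= 1 by rewrite ge_min lexx.
  have dl2 : dl * (2 * M) <= w j - g.
    by rewrite -ler_pdivlMr ?mulr_gt0 // ge_min lexx orbT.
  have Hi := @work_incr R J r m sigma ms j C (C + dl) (ltW (hm j)).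
  have : (W (C + dl)%R < (w j)%:E)%E.
    have cd : C <= C + dl by lra.
    have Hi2 := Hi cd; rewrite -/W in Hi2.
    apply: (le_lt_trans Hi2).
    rewrite fin -EFinD lte_fin.
    have hn : `|C + dl - r j| <= `|C - r j| + 1.
      have -> : C + dl - r j = (C - r j) + dl by lra.
      apply: (le_trans (ler_normD _ _)); rewrite lerD2l ger0_norm //; exact: ltW.
    have : m j * `|C + dl - r j| * (C + dl - C) <= M * dl.
      have -> : C + dl - C = dl by lra.
      rewrite ler_pM2r; last exact: dl0.
      by rewrite /M ler_pM2l; [exact: hn| exact: hm].
    have hMd : M * dl < w j - g by nra.
    lra.
  move=> H; have := sup_upper_bound hsup H; rewrite -/C; lra.
rewrite ler_pdivrMr //; rewrite /T1 in CT1; lra.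
Qed.
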